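(* For each $n$, let $G=(V,E)$ be the complete graph on $V=\{1,\ldots,n\}$ and let $b(\mathbf x)=\sum_{ij\in E}a_{ij}x_ix_j$, where the coefficients $a_{ij}$ are chosen independently and uniformly at random from $\{1,-1\}$. For $\mathbf x=(1/2,1/2,\ldots,1/2)$ we have \[\lim_{n\to\infty}\Pr\left[\operatorname{mcgap}[b](\mathbf x)\geqslant\frac{\sqrt n}{4}\operatorname{chgap}[b](\mathbf x)\right]=1.\]
   Context: Let $G=(V,E)$ be an undirected graph with $V=\{1,\ldots,n\}$; write $ij$ for the edge $\{i,j\}$. A bilinear function is $b:[0,1]^n\to\mathbb R$, $b(\mathbf x)=\sum_{ij\in E}a_{ij}x_ix_j$ with real coefficients $a_{ij}$. Its graph is $B=\{(\mathbf x,z)\in[0,1]^n\times\mathbb R: z=b(\mathbf x)\}$, and $\operatorname{conv}(B)$ is its convex hull. The McCormick polytopes are $P=\{(\mathbf x,\mathbf y)\in[0,1]^n\times[0,1]^{|E|}: y_{ij}\le x_i,\ y_{ij}\le x_j,\ y_{ij}\ge x_i+x_j-1\ \forall ij\in E\}$ and $Q=\{(\mathbf x,z)\in[0,1]^n\times\mathbb R:\exists\mathbf y\in[0,1]^{|E|}\text{ with }(\mathbf x,\mathbf y)\in P,\ z=\sum_{ij\in E}a_{ij}y_{ij}\}$. Define for $\mathbf x\in[0,1]^n$: $\operatorname{cav}[b](\mathbf x)=\max\{z:(\mathbf x,z)\in\operatorname{conv}(B)\}$, $\operatorname{vex}[b](\mathbf x)=\min\{z:(\mathbf x,z)\in\operatorname{conv}(B)\}$,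 $\operatorname{mcu}[b](\mathbf x)=\max\{z:(\mathbf x,z)\in Q\}$, $\operatorname{mcl}[b](\mathbf x)=\min\{z:(\mathbf x,z)\in Q\}$, the convex hull gap $\operatorname{chgap}[b]=\operatorname{cav}[b]-\operatorname{vex}[b]$ and the McCormick gap $\operatorname{mcgap}[b]=\operatorname{mcu}[b]-\operatorname{mcl}[b]$. *)

(* Defs.v *)
From Stdlib Require Import Reals ClassicalEpsilon.
From Stdlib Require List.
From mathcomp Require Import all_boot.

Set Implicit Arguments. Unset Strict Implicit. Unset Printing Implicit Defensive.

Open Scope R_scope.

(* Vertices are 'I_n (standing for 1..n); edges of the complete graph K_n are
   pairs (i,j) with i < j. *)
Notation edge n := {p : 'I_n * 'I_n | (p.1 < p.2)%N}.

Definition signs (n : nat) := {ffun edge n -> bool}.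

Definition coef (n : nat) (s : signs n) (e : edge n) : R :=
  if s e then 1 else -1.

Definition Rsum (T : Type) (l : seq T) (f : T -> R) : R :=
  foldr (fun t acc => f t + acc) 0 l.

Definition bil (n : nat) (s : signs n) (x : 'I_n -> R) : R :=
  Rsum (enum {: edge n}) (fun e => coef s e * x (val e).1 * x (val e).2).

Definition inbox (n : nat) (x : 'I_n -> R) : Prop := forall i, 0 <= x i <= 1.

(* (x,z) in conv(B): finite convex combination of points of the graph B. *)
Definition in_convB (n : nat) (s : signs n) (x : 'I_n -> R) (z : R) : Prop :=
  exists l : seq (R * ('I_n -> R)),
    List.Forall (fun p => 0 <= fst p /\ inbox (snd p)) l /\
    Rsum l fst = 1 /\
    (forall i, x i = Rsum l (fun p => fst p * snd p i)) /\
    z = Rsum l (fun p => fst p * bil s (snd p)).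

(* (x,z) in Q, the McCormick relaxation projected to (x,z). *)
Definition in_Q (n : nat) (s : signs n) (x : 'I_n -> R) (z : R) : Prop :=
  inbox x /\
  exists y : edge n -> R,
    (forall e, 0 <= y e <= 1 /\ y e <= x (val e).1 /\ y e <= x (val e).2 /\
               x (val e).1 + x (val e).2 - 1 <= y e) /\
    z = Rsum (enum {: edge n}) (fun e => coef s e * y e).

Definition Rmax_of (S : R -> Prop) : R :=
  epsilon (inhabits 0) (fun v => S v /\ forall z, S z -> z <= v).
Definition Rmin_of (S : R -> Prop) : R :=
  epsilon (inhabits 0) (fun v => S v /\ forall z, S z -> v <= z).

Definition cav (n : nat) (s : signs n) (x : 'I_n -> R) : R := Rmax_of (in_convB s x).
Definition vex (n : nat) (s : signs n) (x : 'I_n -> R) : R := Rmin_of (in_convB s x).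
Definition mcu (n : nat) (s : signs n) (x : 'I_n -> R) : R := Rmax_of (in_Q s x).
Definition mcl (n : nat) (s : signs n) (x : 'I_n -> R) : R := Rmin_of (in_Q s x).

Definition chgap (n : nat) (s : signs n) (x : 'I_n -> R) : R := cav s x - vex s x.
Definition mcgap (n : nat) (s : signs n) (x : 'I_n -> R) : R := mcu s x - mcl s x.

Definition pbool (P : Prop) : bool :=
  if excluded_middle_informative P then true else false.

Definition prob (n : nat) (P : signs n -> Prop) : R :=
  INR #|[set s : signs n | pbool (P s)]| / INR #|{: signs n}|.

(* Main.v *)
Set Warnings "-notation-overridden -redundant-canonical-projection".
Require Import Defs.
From HB Require Import structures.
From Stdlib Require Import Reals Lra ClassicalEpsilon.
From mathcomp Require Import all_boot.

Open Scope R_scope.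
Set Implicit Arguments. Unset Strict Implicit.

Lemma RplusA' : associative Rplus. Proof. by move=> x y z; rewrite Rplus_assoc. Qed.
Lemma RmultA' : associative Rmult. Proof. by move=> x y z; rewrite Rmult_assoc. Qed.
HB.instance Definition _ := Monoid.isComLaw.Build R 0 Rplus RplusA' Rplus_comm Rplus_0_l.
HB.instance Definition _ := Monoid.isComLaw.Build R 1 Rmult RmultA' Rmult_comm Rmult_1_l.
HB.instance Definition _ := Monoid.isMulLaw.Build R 0 Rmult Rmult_0_l Rmult_0_r.
HB.instance Definition _ := Monoid.isAddLaw.Build R Rmult Rplus Rmult_plus_distr_r Rmult_plus_distr_l.

Lemma RsumE (T : Type) (l : seq T) f : Rsum l f = \big[Rplus/0]_(t <- l) f t.
Proof. by elim: l => [|a l IH]; rewrite ?big_nil ?big_cons //= IH. Qed.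

Lemma RsumT (T : finType) (f : T -> R) : Rsum (enum {: T}) f = \big[Rplus/0]_(t : T) f t.
Proof. by rewrite RsumE big_enum. Qed.

Lemma big_le (I : Type) (r : seq I) (P : pred I) (F G : I -> R) :
  (forall i, P i -> F i <= G i) ->
  \big[Rplus/0]_(i <- r | P i) F i <= \big[Rplus/0]_(i <- r | P i) G i.
Proof.
move=> H; apply: (big_ind2 (fun a b => a <= b)); [lra| |by []].
by move=> *; lra.
Qed.

Lemma Rmax_of_spec (S : R -> Prop) v : S v -> (forall z, S z -> z <= v) -> Rmax_of S = v.
Proof.
move=> Sv Hv; rewrite /Rmax_of.
have [w [Sw Hw]] : exists w, S w /\ forall z, S z -> z <= w by exists v.
have := epsilon_spec (inhabits 0) (fun v => S v /\ forall z, S z -> z <= v) (ex_intro _ v (conj Sv Hv)).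
move=> [Se He]; have := Hv _ Se; have := He _ Sv; lra.
Qed.

Lemma Rmin_of_spec (S : R -> Prop) v : S v -> (forall z, S z -> v <= z) -> Rmin_of S = v.
Proof.
move=> Sv Hv; rewrite /Rmin_of.
have := epsilon_spec (inhabits 0) (fun v => S v /\ forall z, S z -> v <= z) (ex_intro _ v (conj Sv Hv)).
move=> [Se He]; have := Hv _ Se; have := He _ Sv; lra.
Qed.

Definition half (n : nat) : 'I_n -> R := fun _ => / 2.
Definition mE (n : nat) : R := INR #|{: edge n}|.
Arguments half n : clear implicits.

Lemma sum_const_R (T : finType) (c : R) : \big[Rplus/0]_(t : T) c = INR #|{: T}| * c.
Proof.
rewrite big_const; elim: #|T| => [|k IH]; first by rewrite /=; lra.
rewrite S_INR /= IH; lra.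
Qed.

Lemma big_sub (I : Type) (r : seq I) (F G : I -> R) :
  \big[Rplus/0]_(i <- r) F i - \big[Rplus/0]_(i <- r) G i = \big[Rplus/0]_(i <- r) (F i - G i).
Proof. elim: r => [|a r IH]; rewrite ?big_nil ?big_cons; lra. Qed.

Lemma mcgap_half n (s : signs n) : mcgap s (half n) = mE n / 2.
Proof.
set yp := fun e : edge n => if s e then / 2 else 0.
set ym := fun e : edge n => if s e then 0 else / 2.
have inb : inbox (half n) by move=> i; rewrite /half; lra.
have Hp : mcu s (half n) = Rsum (enum {: edge n}) (fun e => coef s e * yp e).
  apply: Rmax_of_spec.
    split=> //; exists yp; split=> // e; rewrite /yp /half; case: (s e); lra.
  move=> z [_ [y [Hy ->]]]; rewrite !RsumT; apply: big_le => e _.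
  have := Hy e; rewrite /yp /coef /half; case: (s e); lra.
have Hm : mcl s (half n) = Rsum (enum {: edge n}) (fun e => coef s e * ym e).
  apply: Rmin_of_spec.
    split=> //; exists ym; split=> // e; rewrite /ym /half; case: (s e); lra.
  move=> z [_ [y [Hy ->]]]; rewrite !RsumT; apply: big_le => e _.
  have := Hy e; rewrite /ym /coef /half; case: (s e); lra.
rewrite /mcgap Hp Hm !RsumT big_sub.
rewrite (eq_bigr (fun _ => /2)); first by rewrite (sum_const_R (edge n)) /mE /Rdiv.
by move=> e _; rewrite /coef /yp /ym; case: (s e); lra.
Qed.

Definition bilc (n : nat) (a : edge n -> R) (x : 'I_n -> R) : R :=
  \big[Rplus/0]_(e : edge n) (a e * x (val e).1 * x (val e).2).

Lemma bil_bilc n (s : signs n) x : bil s x = bilc (coef s) x.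
Proof. by rewrite /bil RsumT. Qed.

Definition upd n (d : 'I_n -> R) k v : 'I_n -> R := fun i => if i == k then v else d i.

Lemma affine_sum (I : Type) (r : seq I) (f : I -> R -> R) :
  (forall i, exists al be, forall v, f i v = al + be * v) ->
  exists al be, forall v, \big[Rplus/0]_(i <- r) f i v = al + be * v.
Proof.
move=> H; elim: r => [|i r [al [be IH]]].
  by exists 0, 0 => v; rewrite big_nil; lra.
have [a1 [b1 H1]] := H i.
exists (a1 + al), (b1 + be) => v; rewrite big_cons H1 IH; lra.
Qed.

Lemma term_aff n (c : R) (i j k : 'I_n) (d : 'I_n -> R) : i != j ->
  exists al be, forall v, c * upd d k v i * upd d k v j = al + be * v.
Proof.
move=> ne; rewrite /upd.
case: (i =P k) => [E1|_]; case: (j =P k) => [E2|_].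
- by move: ne; rewrite E1 E2 eqxx.
- by exists 0, (c * d j); move=> v; ring.
- by exists 0, (c * d i); move=> v; ring.
- by exists (c * d i * d j), 0; move=> v; ring.
Qed.

Lemma bilc_affine n (a : edge n -> R) d k :
  exists al be, forall v, bilc a (upd d k v) = al + be * v.
Proof.
apply: affine_sum => e; apply: term_aff.
apply/negP => /eqP E; have := valP e; rewrite /= E ltnn //.
Qed.

Definition boxh n (d : 'I_n -> R) := forall i, - / 2 <= d i <= / 2.
Definition vert_on n (l : seq 'I_n) (d : 'I_n -> R) :=
  forall k, k \in l -> d k = / 2 \/ d k = - / 2.

Lemma push n (a : edge n -> R) (l : seq 'I_n) d : boxh d ->
  exists d', boxh d' /\ vert_on l d' /\ bilc a d <= bilc a d'.
Proof.
elim: l d => [|k l IH] d bd.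
  by exists d; split=> //; split=> //; lra.
have [d1 [bd1 [v1 le1]]] := IH d bd.
have [al [be Hab]] := bilc_affine a d1 k.
have E : bilc a d1 = bilc a (upd d1 k (d1 k)).
  by rewrite /bilc; apply: eq_bigr => e _; rewrite /upd; do 2 case: eqP => [->|] //.
have bk := bd1 k.
have [hp|hm] : al + be * d1 k <= al + be * (/2) \/ al + be * d1 k <= al + be * (- /2).
  case: (Rle_dec 0 be) => hb; [left|right]; nra.
- exists (upd d1 k (/2)); split; [|split].
  + by move=> i; rewrite /upd; case: eqP => _; [lra|apply: bd1].
  + move=> j; rewrite /upd inE; case: eqP => [_|_] /=; first by left.
    by apply: v1.
  + by rewrite Hab; rewrite E Hab in le1; lra.
- exists (upd d1 k (- /2)); split; [|split].
  + by move=> i; rewrite /upd; case: eqP => _; [lra|apply: bd1].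
  + move=> j; rewrite /upd inE; case: eqP => [_|_] /=; first by right.
    by apply: v1.
  + by rewrite Hab; rewrite E Hab in le1; lra.
Qed.

Definition dv n (u : {ffun 'I_n -> bool}) : 'I_n -> R := fun i => if u i then / 2 else - / 2.

Lemma ml_max n (a : edge n -> R) d : boxh d -> exists u, bilc a d <= bilc a (dv u).
Proof.
move=> bd; have [d' [_ [v le]]] := push a (enum 'I_n) bd.
exists [ffun i => if Req_EM_T (d' i) (/2) then true else false].
suff -> : bilc a (dv [ffun i => if Req_EM_T (d' i) (/2) then true else false]) = bilc a d' by [].
rewrite /bilc; apply: eq_bigr => e _.
have P : forall i, dv [ffun i => if Req_EM_T (d' i) (/2) then true else false] i = d' i.
  move=> i; rewrite /dv ffunE; case: Req_EM_T => H /=; first by rewrite H.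
  have := v i; rewrite mem_enum => /(_ isT); case=> ?; lra.
by rewrite !P.
Qed.

Lemma big_opp (I : Type) (r : seq I) (F : I -> R) :
  \big[Rplus/0]_(i <- r) (- F i) = - \big[Rplus/0]_(i <- r) F i.
Proof. elim: r => [|a r IH]; rewrite ?big_nil ?big_cons; lra. Qed.

Lemma bilc_opp n (a : edge n -> R) d : bilc (fun e => - a e) d = - bilc a d.
Proof.
rewrite /bilc -big_opp; apply: eq_bigr => e _; by rewrite -!Ropp_mult_distr_l.
Qed.

Lemma ml_min n (a : edge n -> R) d : boxh d -> exists u, bilc a (dv u) <= bilc a d.
Proof.
move=> bd; have [u H] := ml_max (fun e => - a e) bd; exists u.
by rewrite !bilc_opp in H; lra.
Qed.

Lemma fin_argmax (T : finType) (x0 : T) (f : T -> R) : exists u, forall v, f v <= f u.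
Proof.
have H : forall l : seq T, exists u, forall v, v \in l -> f v <= f u.
  elim=> [|a l [u IH]]; first by exists x0.
  case: (Rle_dec (f a) (f u)) => h.
    exists u => v; rewrite inE => /orP [/eqP ->|]; [lra|apply: IH].
  exists a => v; rewrite inE => /orP [/eqP ->|/IH]; lra.
have [u Hu] := H (enum T); exists u => v; apply: Hu; by rewrite mem_enum.
Qed.

Lemma Rsum_add (T : Type) (l : seq T) f g :
  Rsum l (fun t => f t + g t) = Rsum l f + Rsum l g.
Proof. elim: l => [|a l IH] /=; lra. Qed.

Lemma Rsum_mulr (T : Type) (l : seq T) f c :
  Rsum l (fun t => f t * c) = Rsum l f * c.
Proof. elim: l => [|a l IH] /=; [lra|rewrite IH; ring]. Qed.

Lemma Rsum_ext (T : Type) (l : seq T) f g : (forall t, f t = g t) -> Rsum l f = Rsum l g.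
Proof. move=> H; elim: l => [|a l IH] //=; by rewrite H IH. Qed.

Lemma Rsum_le_Forall (T : Type) (P : T -> Prop) (l : seq T) f g :
  List.Forall P l -> (forall t, P t -> f t <= g t) -> Rsum l f <= Rsum l g.
Proof. move=> HF H; elim: HF => [|a l' Pa _ IH] /=; [lra|have := H a Pa; lra]. Qed.

Definition Lc (n : nat) (a : edge n -> R) (d : 'I_n -> R) : R :=
  \big[Rplus/0]_(e : edge n) (a e * (d (val e).1 + d (val e).2) / 2).

Lemma Lc_ext n (a : edge n -> R) f g : (forall i, f i = g i) -> Lc a f = Lc a g.
Proof. by move=> H; rewrite /Lc; apply: eq_bigr => e _; rewrite !H. Qed.

Lemma bilc_ext n (a : edge n -> R) f g : (forall i, f i = g i) -> bilc a f = bilc a g.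
Proof. by move=> H; rewrite /bilc; apply: eq_bigr => e _; rewrite !H. Qed.

Lemma Lc_lin n (a : edge n -> R) c f g :
  Lc a (fun i => c * f i + g i) = c * Lc a f + Lc a g.
Proof.
rewrite /Lc big_distrr -big_split; apply: eq_bigr => e _ /=.
move: (f (val e).1) (f (val e).2) (g (val e).1) (g (val e).2) (a e) => x1 x2 y1 y2 ae.
field.
Qed.

Lemma Lc_zero n (a : edge n -> R) : Lc a (fun _ => 0) = 0.
Proof.
rewrite /Lc big1 // => e _; lra.
Qed.

Lemma Lc_avg n (a : edge n -> R) (l : seq (R * ('I_n -> R))) (d : R * ('I_n -> R) -> 'I_n -> R) :
  Rsum l (fun p => fst p * Lc a (d p)) = Lc a (fun i => Rsum l (fun p => fst p * d p i)).
Proof.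
elim: l => [|p l IH] /=; first by rewrite Lc_zero.
by rewrite IH Lc_lin.
Qed.

Lemma Lc_neg n (a : edge n -> R) d : Lc a (fun i => - d i) = - Lc a d.
Proof.
have -> : Lc a (fun i => - d i) = Lc a (fun i => (-1) * d i + 0).
  by apply: Lc_ext => i; ring.
rewrite Lc_lin Lc_zero; ring.
Qed.

Lemma bilc_neg n (a : edge n -> R) d : bilc a (fun i => - d i) = bilc a d.
Proof.
rewrite /bilc; apply: eq_bigr => e _.
move: (d (val e).1) (d (val e).2) (a e) => x y ae; ring.
Qed.

Lemma decomp n (a : edge n -> R) (p : 'I_n -> R) :
  bilc a p = bilc a (half n) + Lc a (fun i => p i - /2) + bilc a (fun i => p i - /2).
Proof.
rewrite /bilc /Lc -!big_split; apply: eq_bigr => e _ /=; rewrite /half.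
move: (p (val e).1) (p (val e).2) (a e) => x y ae; field.
Qed.

Lemma boxh_delta n (p : 'I_n -> R) : inbox p -> boxh (fun i => p i - /2).
Proof. by move=> H i; have := H i; lra. Qed.

Lemma dv_box n (u : {ffun 'I_n -> bool}) : boxh (dv u).
Proof. by move=> i; rewrite /dv; case: (u i); lra. Qed.

Section CavVex.
Variable n : nat.
Variable s : signs n.
Local Notation a := (coef s).

Lemma conv_bound (z : R) (B : R) :
  (forall d, boxh d -> bilc a d <= B) ->
  in_convB s (half n) z -> z <= bilc a (half n) + B.
Proof.
move=> HB [l [HF [H1 [Hx ->]]]].
have E : Rsum l (fun p => fst p * bil s (snd p)) =
   Rsum l (fun p => fst p * bilc a (half n) + fst p * Lc a (fun i => snd p i - /2)
                    + fst p * bilc a (fun i => snd p i - /2)).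
  by apply: Rsum_ext => p; rewrite bil_bilc (decomp a (snd p)); ring.
rewrite E.
apply: Rle_trans (Rsum_le_Forall (g := fun p => fst p * bilc a (half n) + fst p * Lc a (fun i => snd p i - /2)
                    + fst p * B) HF _) _.
  move=> p [hp hi] /=; have := HB _ (boxh_delta hi).
  move: (bilc a _) => t ht; nra.
rewrite !Rsum_add.
rewrite Rsum_mulr Lc_avg Rsum_mulr H1.
rewrite (Lc_ext a (g := fun _ => 0)) ?Lc_zero; first lra.
move=> i.
have -> : Rsum l (fun p => fst p * (snd p i - / 2)) =
          Rsum l (fun p => fst p * snd p i) + Rsum l (fun p => fst p * (- / 2)).
  by rewrite -Rsum_add; apply: Rsum_ext => p; ring.
by rewrite Rsum_mulr H1 -Hx /half; lra.
Qed.

Lemma conv_bound_low (z : R) (B : R) :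
  (forall d, boxh d -> B <= bilc a d) ->
  in_convB s (half n) z -> bilc a (half n) + B <= z.
Proof.
move=> HB [l [HF [H1 [Hx ->]]]].
have E : Rsum l (fun p => fst p * bil s (snd p)) =
   Rsum l (fun p => fst p * bilc a (half n) + fst p * Lc a (fun i => snd p i - /2)
                    + fst p * bilc a (fun i => snd p i - /2)).
  by apply: Rsum_ext => p; rewrite bil_bilc (decomp a (snd p)); ring.
rewrite E.
apply: Rle_trans _ (Rsum_le_Forall (f := fun p => fst p * bilc a (half n) + fst p * Lc a (fun i => snd p i - /2)
                    + fst p * B) HF _).
  rewrite !Rsum_add.
    rewrite Rsum_mulr Lc_avg Rsum_mulr H1.
  rewrite (Lc_ext a (g := fun _ => 0)) ?Lc_zero; first lra.
  move=> i.
  have -> : Rsum l (fun p => fst p * (snd p i - / 2)) =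
            Rsum l (fun p => fst p * snd p i) + Rsum l (fun p => fst p * (- / 2)).
    by rewrite -Rsum_add; apply: Rsum_ext => p; ring.
  by rewrite Rsum_mulr H1 -Hx /half; lra.
move=> p [hp hi] /=; have := HB _ (boxh_delta hi).
move: (bilc a _) => t ht; nra.
Qed.

Lemma conv_mem (u : {ffun 'I_n -> bool}) :
  in_convB s (half n) (bilc a (half n) + bilc a (dv u)).
Proof.
exists [:: (/2, fun i => /2 + dv u i); (/2, fun i => /2 - dv u i)].
split; [|split; [|split]].
- have H2 : 0 <= / 2 by lra.
  constructor; first by split=> // i /=; rewrite /dv; case: (u i); lra.
  constructor; first by split=> // i /=; rewrite /dv; case: (u i); lra.
  by constructor.
- rewrite /=; lra.
- by move=> i; rewrite /= /half; lra.
- rewrite /= !bil_bilc (decomp a (fun i => /2 + dv u i)) (decomp a (fun i => /2 - dv u i)).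
  rewrite (Lc_ext a (f := fun i => / 2 + dv u i - / 2) (g := dv u)); last by move=> i; ring.
  rewrite (Lc_ext a (f := fun i => / 2 - dv u i - / 2) (g := fun i => - dv u i)); last by move=> i; ring.
  rewrite (bilc_ext a (f := fun i => / 2 + dv u i - / 2) (g := dv u)); last by move=> i; ring.
  rewrite (bilc_ext a (f := fun i => / 2 - dv u i - / 2) (g := fun i => - dv u i)); last by move=> i; ring.
  rewrite Lc_neg bilc_neg; lra.
Qed.

Lemma chgap_eq : exists umax umin,
  chgap s (half n) = bilc a (dv umax) - bilc a (dv umin).
Proof.
have [umax Hmax] := fin_argmax [ffun _ => true] (fun u => bilc a (dv u)).
have [umin Hmin] := fin_argmax [ffun _ => true] (fun u => - bilc a (dv u)).
exists umax, umin.
have Ecav : cav s (half n) = bilc a (half n) + bilc a (dv umax).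
  apply: Rmax_of_spec; first exact: conv_mem.
  move=> z; apply: conv_bound => d /(ml_max a) [u Hu]; have := Hmax u; simpl; lra.
have Evex : vex s (half n) = bilc a (half n) + bilc a (dv umin).
  apply: Rmin_of_spec; first exact: conv_mem.
  move=> z; apply: conv_bound_low => d /(ml_min a) [u Hu]; have := Hmin u; simpl; lra.
rewrite /chgap Ecav Evex; ring.
Qed.
End CavVex.

Lemma iter_plus (c : R) k : iter k (Rplus c) 0 = INR k * c.
Proof. elim: k => [|k IH]; first by rewrite /=; lra. rewrite S_INR /= IH; lra. Qed.

Lemma iter_mult (c : R) k : iter k (Rmult c) 1 = c ^ k.
Proof. elim: k => [|k IH] //=. by rewrite IH. Qed.

Lemma card_R (T : finType) (P : pred T) :
  INR #|[pred t | P t]| = \big[Rplus/0]_(t : T) (if P t then 1 else 0).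
Proof.
rewrite -big_mkcond /=.
rewrite (eq_bigl (fun t => t \in [pred t | P t])) //.
by rewrite big_const iter_plus Rmult_1_r.
Qed.

Lemma exp_nat (x : R) k : exp (INR k * x) = exp x ^ k.
Proof.
elim: k => [|k IH]; first by rewrite /= Rmult_0_l exp_0.
by rewrite S_INR /= Rmult_plus_distr_r Rmult_1_l exp_plus IH; ring.
Qed.

Definition cnt (n : nat) (s : signs n) (g : edge n -> bool) : nat := #|[pred e | s e == g e]|.

Lemma sum_over_in (T : finType) (A : {pred T}) (F : T -> R) :
  (forall t, 0 <= F t) -> \big[Rplus/0]_(t in A) F t <= \big[Rplus/0]_(t : T) F t.
Proof.
move=> H; rewrite big_mkcond /=; apply: big_le => t _.
case: (t \in A); [lra|apply: H].
Qed.

Lemma weight_sum n (g : edge n -> bool) (c : R) :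
  \big[Rplus/0]_(s : signs n) \big[Rmult/1]_(e : edge n) (if s e == g e then c else 1)
  = (1 + c) ^ #|{: edge n}|.
Proof.
rewrite -(bigA_distr_bigA (fun e b => if b == g e then c else 1)).
rewrite (eq_bigr (fun _ => 1 + c)); last first.
  move=> e _; rewrite big_bool /=; case: (g e) => /=; lra.
by rewrite big_const iter_mult.
Qed.

Lemma weight_eq n (g : edge n -> bool) (s : signs n) (lam : R) :
  \big[Rmult/1]_(e : edge n) (if s e == g e then exp lam else 1) = exp (INR (cnt s g) * lam).
Proof.
rewrite exp_nat -big_mkcond /= /cnt.
rewrite (eq_bigl (fun t => t \in [pred e | s e == g e])) //.
by rewrite big_const iter_mult.
Qed.

Lemma tail n (g : edge n -> bool) (lam K : R) : 0 < lam ->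
  INR #|[pred s : signs n | pbool (K < INR (cnt s g))]| * exp (lam * K)
   <= (1 + exp lam) ^ #|{: edge n}|.
Proof.
move=> hl.
rewrite -(weight_sum g (exp lam)).
set A := [pred s : signs n | pbool (K < INR (cnt s g))].
have -> : INR #|A| * exp (lam * K) = \big[Rplus/0]_(s in A) exp (lam * K).
  by rewrite big_const iter_plus.
apply: (Rle_trans _ (\big[Rplus/0]_(s in A)
   \big[Rmult/1]_(e : edge n) (if s e == g e then exp lam else 1))).
  apply: big_le => s; rewrite inE /pbool; case: excluded_middle_informative => // H _.
  rewrite weight_eq; apply: Rlt_le; apply: exp_increasing; nra.
apply: sum_over_in => s; rewrite weight_eq; apply: Rlt_le; apply: exp_pos.
Qed.

Definition gu (n : nat) (u : {ffun 'I_n -> bool}) (e : edge n) : bool :=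
  u (val e).1 == u (val e).2.

Lemma sum_affine (T : finType) (F : T -> R) (a b : R) :
  \big[Rplus/0]_(t : T) (a * F t + b) = a * \big[Rplus/0]_(t : T) F t + INR #|{: T}| * b.
Proof. by rewrite big_split /= -big_distrr sum_const_R. Qed.

Lemma sum_affine_e n (F : edge n -> R) (a b : R) :
  \big[Rplus/0]_(t : edge n) (a * F t + b) = a * \big[Rplus/0]_(t : edge n) F t + mE n * b.
Proof. by rewrite sum_affine. Qed.

Lemma sum_ind_e n (P : pred (edge n)) (a b : R) :
  \big[Rplus/0]_(t : edge n) (a * (if P t then 1 else 0) + b) = a * INR #|[pred t | P t]| + mE n * b.
Proof. by rewrite sum_affine (card_R P). Qed.

Lemma sum_cnt n (s : signs n) (g : edge n -> bool) (a b : R) :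
  \big[Rplus/0]_(t : edge n) (a * (if s t == g t then 1 else 0) + b) = a * INR (cnt s g) + mE n * b.
Proof. by rewrite sum_ind_e. Qed.

Lemma bil_dv n (s : signs n) u :
  bilc (coef s) (dv u) = / 4 * (2 * INR (cnt s (gu u)) - mE n).
Proof.
rewrite /bilc.
rewrite (eq_bigr (fun e => / 2 * (if s e == gu u e then 1 else 0) + (- / 4))).
  rewrite sum_cnt; lra.
move=> e _; rewrite /coef /dv /gu.
case: (s e); case: (u (val e).1); case: (u (val e).2) => /=; lra.
Qed.

Lemma cnt_neg n (s : signs n) (g : edge n -> bool) :
  INR (cnt s (fun e => ~~ g e)) = mE n - INR (cnt s g).
Proof.
transitivity (\big[Rplus/0]_(t : edge n) (1 * (if s t == ~~ g t then 1 else 0) + 0)).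
  by rewrite sum_cnt; ring.
rewrite (eq_bigr (fun e => (-1) * (if s e == g e then 1 else 0) + 1)).
  by rewrite sum_cnt; ring.
by move=> e _; case: (s e); case: (g e) => /=; lra.
Qed.

Definition thr (n : nat) : R := mE n / sqrt (INR n).
Definition Kn (n : nat) : R := mE n / 2 + 2 * thr n.
Definition bad (n : nat) (s : signs n) : Prop :=
  exists u : {ffun 'I_n -> bool}, thr n < Rabs (bilc (coef s) (dv u)).

Definition Au n (u : {ffun 'I_n -> bool}) := [pred s : signs n | pbool (Kn n < INR (cnt s (gu u)))].
Definition Bu n (u : {ffun 'I_n -> bool}) :=
  [pred s : signs n | pbool (Kn n < INR (cnt s (fun e => ~~ gu u e)))].

Lemma pboolT (P : Prop) : P -> pbool P = true.
Proof. by rewrite /pbool; case: excluded_middle_informative. Qed.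
Lemma pboolF (P : Prop) : ~ P -> pbool P = false.
Proof. by rewrite /pbool; case: excluded_middle_informative. Qed.

Lemma big_ge0 (T : finType) (F : T -> R) : (forall t, 0 <= F t) -> 0 <= \big[Rplus/0]_(t : T) F t.
Proof. move=> H; apply: (big_ind (fun x => 0 <= x)) => //; [lra|move=> *; lra]. Qed.

Lemma union_bound n :
  INR #|[pred s : signs n | pbool (bad s)]| <=
  \big[Rplus/0]_(u : {ffun 'I_n -> bool}) (INR #|Au u| + INR #|Bu u|).
Proof.
rewrite card_R.
have E : forall u, INR #|Au u| + INR #|Bu u| =
   \big[Rplus/0]_(s : signs n) ((if s \in Au u then 1 else 0) + (if s \in Bu u then 1 else 0)).
  by move=> u; rewrite big_split /= -!card_R.
rewrite (eq_bigr _ (fun u _ => E u)) exchange_big /=.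
apply: big_le => s _.
have nn : forall u, 0 <= (if s \in Au u then 1 else 0) + (if s \in Bu u then 1 else 0).
  by move=> u; case: (s \in Au u); case: (s \in Bu u); lra.
case: (excluded_middle_informative (bad s)) => [[u Hu]|nb]; last first.
  by rewrite pboolF //; apply: big_ge0.
rewrite pboolT; last by exists u.
rewrite (bigD1 u) //=.
suff : (s \in Au u) || (s \in Bu u).
  move=> H; apply: (Rle_trans _ ((if s \in Au u then 1 else 0) + (if s \in Bu u then 1 else 0) + 0)).
    by move: H; case: (s \in Au u); case: (s \in Bu u) => //= _; lra.
  apply: Rplus_le_compat_l.
  by apply: (big_ind (fun x => 0 <= x)) => //; [lra|move=> *; lra].
move: Hu; rewrite bil_dv /Kn.
move: (cnt_neg s (gu u)) => Hneg.
rewrite /Au /Bu !inE.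
case: (Rle_dec 0 (/ 4 * (2 * INR (cnt s (gu u)) - mE n))) => h.
  rewrite Rabs_pos_eq // => H; rewrite pboolT // /Kn; lra.
rewrite Rabs_left; last lra.
move=> H; rewrite orbC pboolT // /Kn; lra.
Qed.

Lemma card_edge n : 2 * mE n = INR n * INR n - INR n.
Proof.
pose S1 := \big[Rplus/0]_(p : 'I_n * 'I_n) (if (p.1 < p.2)%N then 1 else 0).
pose S2 := \big[Rplus/0]_(p : 'I_n * 'I_n) (if (p.2 < p.1)%N then 1 else 0).
pose S3 := \big[Rplus/0]_(p : 'I_n * 'I_n) (if p.1 == p.2 then 1 else 0).
have Ea : mE n = S1 by rewrite /mE card_sig card_R.
have Eb : S1 = S2.
  rewrite /S1 (reindex_inj (h := fun p : 'I_n * 'I_n => (p.2, p.1))) //.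
  by move=> [a b] [c d] [-> ->].
have Ec : S1 + S2 + S3 = INR n * INR n.
  rewrite /S1 /S2 /S3 -!big_split /=.
  rewrite (eq_bigr (fun _ => 1)).
    by rewrite sum_const_R card_prod card_ord mult_INR; lra.
  move=> [a b] _ /=; rewrite -[a == b]/(nat_of_ord a == nat_of_ord b).
  case: (ltngtP a b) => _ /=; lra.
have Ed : S3 = INR n.
  rewrite /S3 -(pair_big xpredT xpredT (fun i j : 'I_n => if i == j then 1 else 0)) /=.
  rewrite (eq_bigr (fun _ => 1)); first by rewrite sum_const_R card_ord; lra.
  move=> i _; rewrite (bigD1 i) //= eqxx big1 ?Rplus_0_r // => j /negbTE.
  by rewrite eq_sym => ->.
lra.
Qed.

Lemma Rabs_le_between x t : Rabs x <= t -> - t <= x <= t.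
Proof. rewrite /Rabs; case: Rcase_abs => h H; lra. Qed.

Lemma good n (s : signs n) : (1 <= n)%N -> ~ bad s ->
  mcgap s (half n) >= sqrt (INR n) / 4 * chgap s (half n).
Proof.
move=> n1 nb.
have [umax [umin E]] := chgap_eq s.
rewrite mcgap_half E.
have Hu : forall u, Rabs (bilc (coef s) (dv u)) <= thr n.
  by move=> u; apply: Rnot_lt_le => H; apply: nb; exists u.
have h1 := Hu umax; have h2 := Hu umin.
have h1' := Rabs_le_between h1 ; have h2' := Rabs_le_between h2.
have hn : 0 < INR n by apply: lt_0_INR; apply/leP.
have hs : 0 < sqrt (INR n) by apply: sqrt_lt_R0.
have Ht : sqrt (INR n) * thr n = mE n by rewrite /thr; field; lra.
move: h1' h2' Ht; move: (bilc _ (dv umax)) (bilc _ (dv umin)) (thr n) => x y t.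
move=> [? ?] [? ?] Ht.
apply: Rle_ge.
have : sqrt (INR n) / 4 * (x - y) <= sqrt (INR n) / 4 * (2 * t).
  apply: Rmult_le_compat_l; lra.
lra.
Qed.

Lemma exp_le_inv (l : R) : 0 <= l < 1 -> exp l <= / (1 - l).
Proof.
move=> [h0 h1].
have H := exp_ineq1_le (- l).
rewrite -(Ropp_involutive l) exp_Ropp.
apply: Rinv_le_contravar; lra.
Qed.

Lemma analytic (r mm : R) : 16 <= r -> 2 * mm = r * r * (r * r) - r * r ->
  mm * ((2 / r) / (2 * (1 - 2 / r))) - (2 / r) * (mm / 2 + 2 * (mm / r))
  <= - (6 / 7) * (r * r - 1).
Proof.
move=> hr hm.
have E : mm * ((2 / r) / (2 * (1 - 2 / r))) - (2 / r) * (mm / 2 + 2 * (mm / r))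
       = (r * r - 1) * ((4 - r) / (r - 2)).
  have -> : mm = (r * r * (r * r) - r * r) / 2 by lra.
  field; split; lra.
rewrite E.
have h1 : (4 - r) / (r - 2) <= - (6 / 7).
  apply: (Rmult_le_reg_r (r - 2)); first lra.
  rewrite /Rdiv Rmult_assoc Rinv_l; lra.
have h2 : 0 <= r * r - 1 by nra.
nra.
Qed.

Lemma card_Rin (T : finType) (A : {pred T}) :
  INR #|A| = \big[Rplus/0]_(t : T) (if t \in A then 1 else 0).
Proof. by rewrite -big_mkcond big_const iter_plus Rmult_1_r. Qed.

Lemma pow2_INR k : INR (2 ^ k)%N = 2 ^ k.
Proof. elim: k => [|k IH] //. by rewrite expnS mult_INR IH /=. Qed.

Lemma card_signs n : INR #|{: signs n}| = 2 ^ #|{: edge n}|.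
Proof. by rewrite card_ffun card_bool pow2_INR. Qed.

Lemma card_u n : INR #|{: {ffun 'I_n -> bool}}| = 2 ^ n.
Proof. by rewrite card_ffun card_bool card_ord pow2_INR. Qed.

Lemma prob_bound n (P : signs n -> Prop) : (forall s, ~ bad s -> P s) ->
  1 - INR #|[pred s : signs n | pbool (bad s)]| / INR #|{: signs n}| <= prob P /\ prob P <= 1.
Proof.
move=> HP.
have hT : 0 < INR #|{: signs n}| by rewrite card_signs; apply: pow_lt; lra.
rewrite /prob; split.
- have : INR #|{: signs n}| <= INR #|[set s : signs n | pbool (P s)]| + INR #|[pred s : signs n | pbool (bad s)]|.
    have -> : INR #|{: signs n}| = \big[Rplus/0]_(s : signs n) 1.
      by rewrite sum_const_R Rmult_1_r.
    rewrite (card_Rin [set s : signs n | pbool (P s)]) (card_R (fun s : signs n => pbool (bad s))).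
    rewrite -big_split /=.
    apply: big_le => s _; rewrite inE.
    case: (excluded_middle_informative (bad s)) => hb.
      rewrite (pboolT hb); case: (pbool (P s)); lra.
    rewrite (pboolT (HP s hb)); case: (pbool (bad s)); lra.
  move=> H.
  apply: (Rmult_le_reg_r (INR #|{: signs n}|)) => //.
  rewrite Rmult_minus_distr_r /Rdiv !Rmult_assoc Rinv_l; lra.
- apply: (Rmult_le_reg_r (INR #|{: signs n}|)) => //.
  rewrite /Rdiv Rmult_assoc Rinv_l; last lra.
  rewrite Rmult_1_r Rmult_1_l; apply: le_INR; apply/leP; apply: max_card.
Qed.

Lemma bad_bound n (lam : R) : 0 < lam ->
  INR #|[pred s : signs n | pbool (bad s)]| <=
  2 ^ n * (2 * ((1 + exp lam) ^ #|{: edge n}| / exp (lam * Kn n))).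
Proof.
move=> hl.
apply: Rle_trans (union_bound n) _.
rewrite -card_u -sum_const_R.
apply: big_le => u _.
have hA := tail (gu u) (Kn n) hl.
have hB := tail (fun e => ~~ gu u e) (Kn n) hl.
have he := exp_pos (lam * Kn n).
have hA' : INR #|Au u| <= (1 + exp lam) ^ #|{: edge n}| / exp (lam * Kn n).
  apply: (Rmult_le_reg_r (exp (lam * Kn n))) => //.
  rewrite /Rdiv Rmult_assoc Rinv_l; last lra.
  by rewrite Rmult_1_r.
have hB' : INR #|Bu u| <= (1 + exp lam) ^ #|{: edge n}| / exp (lam * Kn n).
  apply: (Rmult_le_reg_r (exp (lam * Kn n))) => //.
  rewrite /Rdiv Rmult_assoc Rinv_l; last lra.
  by rewrite Rmult_1_r.
lra.
Qed.

Lemma exp_mono x y : x <= y -> exp x <= exp y.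
Proof. case=> [h|->]; [apply: Rlt_le; exact: exp_increasing|lra]. Qed.

Lemma eps_bound n : (256 <= n)%N ->
  INR #|[pred s : signs n | pbool (bad s)]| / INR #|{: signs n}|
  <= 2 * 2 ^ n * exp (- (6 / 7) * (INR n - 1)).
Proof.
move=> hn.
have hn' : 256 <= INR n.
  have -> : 256 = INR 256 by rewrite /= ; lra.
  by apply: le_INR; apply/leP.
set r := sqrt (INR n).
have rr : r * r = INR n by apply: sqrt_sqrt; lra.
have hr : 16 <= r.
  have <- : sqrt (16 * 16) = 16 by apply: sqrt_square; lra.
  apply: sqrt_le_1_alt; lra.
set lam := 2 / r.
have hl0 : 0 < lam by rewrite /lam /Rdiv; apply: Rmult_lt_0_compat; [lra|apply: Rinv_0_lt_compat; lra].
have hl1 : lam <= / 8.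
  rewrite /lam /Rdiv; apply: (Rmult_le_reg_r r); first lra.
  rewrite Rmult_assoc Rinv_l; lra.
have HB := bad_bound n hl0.
rewrite card_signs.
set M := #|{: edge n}| in HB *.
set Ee := 1 + exp lam in HB *.
set a := lam / (2 * (1 - lam)).
have hE : Ee / 2 <= exp a.
  apply: Rle_trans (exp_ineq1_le a).
  have hl2 : lam < 1 by lra.
  have := exp_le_inv (conj (Rlt_le _ _ hl0) hl2).
  rewrite /Ee /a => h.
  have -> : 1 + lam / (2 * (1 - lam)) = (1 + / (1 - lam)) / 2 by field; lra.
  lra.
have hEpos : 0 <= Ee / 2 by rewrite /Ee; have := exp_pos lam; lra.
have hpow : Ee ^ M = 2 ^ M * (Ee / 2) ^ M.
  by rewrite -Rpow_mult_distr; congr (_ ^ _); field.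
have hpow2 : (Ee / 2) ^ M <= exp (INR M * a).
  rewrite exp_nat; apply: pow_incr; lra.
have h2M : 0 < 2 ^ M by apply: pow_lt; lra.
have hK := exp_pos (lam * Kn n).
have hedge := card_edge n.
have Han : INR M * a - lam * Kn n <= - (6 / 7) * (INR n - 1).
  rewrite /a /lam /Kn /thr -/r -rr.
  apply: analytic => //.
  rewrite /M; rewrite -/(mE n) hedge -rr; ring.
have Hexp : exp (INR M * a) / exp (lam * Kn n) <= exp (- (6 / 7) * (INR n - 1)).
  rewrite /Rdiv -exp_Ropp -exp_plus; apply: exp_mono; lra.
apply: (Rmult_le_reg_r (2 ^ M)) => //.
rewrite /Rdiv Rmult_assoc Rinv_l; last lra.
rewrite Rmult_1_r.
apply: Rle_trans HB _.
rewrite hpow.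
have : (Ee / 2) ^ M / exp (lam * Kn n) <= exp (- (6 / 7) * (INR n - 1)).
  apply: Rle_trans Hexp.
  rewrite /Rdiv; apply: Rmult_le_compat_r => //.
  by apply: Rlt_le; apply: Rinv_0_lt_compat.
have h2n : 0 < 2 ^ n by apply: pow_lt; lra.
move: ((Ee / 2) ^ M) (exp (lam * Kn n)) (exp (- (6 / 7) * (INR n - 1))) (2 ^ n) (2 ^ M) hK h2M h2n
  => X Y Z W V hY hV hW h.
rewrite (_ : W * (2 * (V * X / Y)) = (2 * W * V) * (X / Y)); last by field; lra.
apply: Rle_trans (Rmult_le_compat_l _ _ _ _ h) _.
  apply: Rlt_le; apply: Rmult_lt_0_compat; [|lra]; lra.
right; ring.
Qed.

Lemma q_lt1 : 0 < 2 * exp (- (6 / 7)) < 1.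
Proof.
have h1 := exp_ineq1_le (3 / 7).
have h2 : exp (6 / 7) = exp (3 / 7) * exp (3 / 7) by rewrite -exp_plus; congr exp; field.
have h3 : 2 < exp (6 / 7) by rewrite h2; nra.
have h4 := exp_pos (6 / 7).
rewrite exp_Ropp; split.
  apply: Rmult_lt_0_compat; [lra|by apply: Rinv_0_lt_compat].
apply: (Rmult_lt_reg_r (exp (6 / 7))) => //.
rewrite Rmult_assoc Rinv_l; lra.
Qed.

Lemma eps_eq n : 2 * 2 ^ n * exp (- (6 / 7) * (INR n - 1)) =
  (2 * exp (6 / 7)) * (2 * exp (- (6 / 7))) ^ n.
Proof.
rewrite Rpow_mult_distr -exp_nat.
have -> : - (6 / 7) * (INR n - 1) = 6 / 7 + INR n * - (6 / 7) by ring.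
rewrite exp_plus; ring.
Qed.

Theorem theorem1 :
  Un_cv
    (fun n : nat =>
       prob (fun s : signs n =>
               mcgap s (fun _ => / 2) >= sqrt (INR n) / 4 * chgap s (fun _ => / 2)))
    1.
Proof.
move=> eps heps.
have [hq0 hq1] := q_lt1.
have hC : 0 < 2 * exp (6 / 7) by have := exp_pos (6 / 7); lra.
have [N1 HN1] := pow_lt_1_zero (2 * exp (- (6 / 7))) ltac:(rewrite Rabs_pos_eq; lra)
   (eps / (2 * exp (6 / 7))) ltac:(apply: Rdiv_lt_0_compat; lra).
exists (maxn N1 256) => n hn.
have hn1 : (N1 <= n)%N by apply: leq_trans (leq_maxl _ _) _; apply/leP; exact: hn.
have hn2 : (256 <= n)%N by apply: leq_trans (leq_maxr _ _) _; apply/leP; exact: hn.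
have [Hlo Hhi] := prob_bound (P := fun s : signs n =>
     mcgap s (fun _ => / 2) >= sqrt (INR n) / 4 * chgap s (fun _ => / 2))
   (fun s hb => good (leq_trans (isT : (1 <= 256)%N) hn2) hb).
have He := eps_bound hn2.
rewrite eps_eq in He.
have := HN1 n ltac:(apply/leP; exact: hn1).
rewrite Rabs_pos_eq; last by apply: pow_le; lra.
move=> hp.
have : (2 * exp (6 / 7)) * (2 * exp (- (6 / 7))) ^ n < eps.
  have -> : eps = (2 * exp (6 / 7)) * (eps / (2 * exp (6 / 7))) by field; lra.
  by apply: Rmult_lt_compat_l.
rewrite /R_dist Rabs_left1; lra.
Qed.
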